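(* Let $T:[0,1]\to\mathbb{R}$ be Takagi's function, $T(x)=\sum_{n=1}^\infty 2^{-n}\phi^{(n)}(x)$, where $\phi(x)=2x$ for $0\le x\le 1/2$, $\phi(x)=2-2x$ for $1/2\le x\le 1$, and $\phi^{(n)}$ denotes the $n$-fold composition of $\phi$. Let $x\in(0,1)$ be non-dyadic (i.e. not of the form $k/2^m$ with integers $k,m$), and write $$x=\sum_{n=1}^\infty 2^{-a_n},\qquad 1-x=\sum_{n=1}^\infty 2^{-b_n},$$ where $\{a_n\}$ and $\{b_n\}$ are strictly increasing sequences of positive integers (uniquely determined by $x$). Then: (i) $T'_+(x)=+\infty$ if and only if $a_n-2n\to\infty$; (ii) $T'_-(x)=+\infty$ if and only if $a_{n+1}-2a_n+2n-\log_2(a_{n+1}-a_n)\to-\infty$ as $n\to\infty$; (iii) $T'_+(x)=-\infty$ if and only if $b_{n+1}-2b_n+2n-\log_2(b_{n+1}-b_n)\to-\infty$ as $n\to\infty$; (iv) $T'_-(x)=-\infty$ if and only if $b_n-2n\to\infty$.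
   Context: $T'_+(x):=\lim_{h\downarrow 0}\frac{T(x+h)-T(x)}{h}$ and $T'_-(x):=\lim_{h\uparrow 0}\frac{T(x+h)-T(x)}{h}$, whenever these limits exist as extended real numbers. Thus $a_n$ are the positions of the ones and $b_n$ the positions of the zeros in the binary expansion of $x$. *)

(* Defs.v *)
From Stdlib Require Import Reals Lra.
From Coquelicot Require Import Coquelicot.
Open Scope R_scope.

Definition phi (x : R) : R := if Rle_dec x (1/2) then 2 * x else 2 - 2 * x.

Definition takagi (x : R) : R :=
  Series (fun k : nat => (/2) ^ (S k) * Nat.iter (S k) phi x).

Definition dyadic (x : R) : Prop :=
  exists (k : Z) (m : nat), x = IZR k / 2 ^ m.

Definition right_deriv_is (f : R -> R) (x : R) (l : Rbar) : Prop :=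
  filterlim (fun h => (f (x + h) - f x) / h) (at_right 0) (Rbar_locally l).
Definition left_deriv_is (f : R -> R) (x : R) (l : Rbar) : Prop :=
  filterlim (fun h => (f (x + h) - f x) / h) (at_left 0) (Rbar_locally l).

Definition log2 (y : R) : R := ln y / ln 2.

(* a (indexed from 1) lists the positions of the binary digits 1 of y:
   a_1 < a_2 < ..., a_1 >= 1, and y = sum_{n>=1} 2^{-a_n}. *)
Definition binary_positions (a : nat -> nat) (y : R) : Prop :=
  (1 <= a 1)%nat /\ (forall n, (1 <= n)%nat -> (a n < a (S n))%nat) /\
  is_series (fun k : nat => (/2) ^ (a (S k))) y.

(* Main.v *)
Require Import Defs.
From Stdlib Require Import Reals Lra Lia.
From Coquelicot Require Import Coquelicot.
Open Scope R_scope.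

Lemma phi_sym w : phi (1 - w) = phi w.
Proof. unfold phi; destruct (Rle_dec (1-w) (1/2)); destruct (Rle_dec w (1/2)); lra. Qed.

Lemma phi_range w : 0 <= w <= 1 -> 0 <= phi w <= 1.
Proof. unfold phi; destruct (Rle_dec w (1/2)); lra. Qed.

Lemma iter_range n w : 0 <= w <= 1 -> 0 <= Nat.iter n phi w <= 1.
Proof. induction n; simpl; auto. intros; apply phi_range; auto. Qed.

Definition tterm w k := (/2) ^ (S k) * Nat.iter (S k) phi w.

Lemma tterm_bound w k : 0 <= w <= 1 -> 0 <= tterm w k <= (/2) ^ (S k).
Proof.
  intros H. unfold tterm. pose proof (iter_range (S k) w H).
  assert (0 < (/2)^(S k)) by (apply pow_lt; lra). nra.
Qed.

Lemma geom_half : ex_series (fun k => (/2) ^ (S k)).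
Proof.
  apply ex_series_ext with (a := fun k => /2 * (/2)^k).
  { intros; simpl; ring. }
  apply (ex_series_scal_l (/2) (fun k => (/2)^k)).
  apply ex_series_geom. rewrite Rabs_pos_eq; lra.
Qed.

Lemma Series_geom_half : Series (fun k => (/2) ^ (S k)) = 1.
Proof.
  rewrite (Series_ext _ (fun k => /2 * (/2)^k)) by (intros; simpl; ring).
  rewrite Series_scal_l, Series_geom. field. rewrite Rabs_pos_eq; lra.
Qed.

Lemma tak_ex w : 0 <= w <= 1 -> ex_series (tterm w).
Proof.
  intros H. apply (ex_series_le (tterm w) (fun k => (/2)^(S k))).
  - intros k. destruct (tterm_bound w k H). change (Rabs (tterm w k) <= (/2)^(S k)).
    rewrite Rabs_pos_eq; lra.
  - apply geom_half.
Qed.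

Lemma Series_zero : Series (fun _ => 0) = 0.
Proof. rewrite (Series_ext _ (fun n => 0 * (fun _ => 1) n)) by (intros; ring).
  rewrite Series_scal_l; ring. Qed.

Lemma tak_bounds w : 0 <= w <= 1 -> 0 <= takagi w <= 1.
Proof.
  intros H. unfold takagi. fold (tterm w). split.
  - rewrite <- Series_zero. apply Series_le.
    + intros; split; [lra|]. apply tterm_bound; auto.
    + apply tak_ex; auto.
  - rewrite <- Series_geom_half. apply Series_le. intros k; apply (tterm_bound w k H). apply geom_half.
Qed.

Lemma tak_sym w : takagi (1 - w) = takagi w.
Proof.
  unfold takagi. apply Series_ext; intros k.
  rewrite !Nat.iter_succ_r, phi_sym. reflexivity.
Qed.

Lemma tak_rec w : 0 <= w <= 1 -> takagi w = phi w / 2 + takagi (phi w) / 2.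
Proof.
  intros H. unfold takagi. fold (tterm w). fold (tterm (phi w)).
  rewrite Series_incr_1 by (apply tak_ex; auto).
  rewrite (Series_ext (fun k => tterm w (S k)) (fun k => /2 * tterm (phi w) k)).
  2:{ intros k; unfold tterm. rewrite (Nat.iter_succ_r (S k)). simpl. ring. }
  rewrite Series_scal_l. unfold tterm; simpl. field.
Qed.

Lemma tak0 : takagi 0 = 0.
Proof.
  unfold takagi. transitivity (Series (fun _ => 0)); [|apply Series_zero]. apply Series_ext. intros k.
  assert (Nat.iter (S k) phi 0 = 0).
  { induction k. simpl. unfold phi; destruct Rle_dec; lra.
    simpl in *. rewrite IHk. unfold phi; destruct Rle_dec; lra. }
  simpl in H |- *. rewrite H; ring.
Qed.

Lemma tak1 : takagi 1 = 0.
Proof. rewrite <- tak0. replace 1 with (1 - 0) by ring. rewrite tak_sym. f_equal; ring. Qed.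

Lemma tak_half_eq u : 0 <= u <= 1 -> takagi (u/2) = u/2 + takagi u / 2.
Proof.
  intros H. rewrite tak_rec by lra.
  replace (phi (u/2)) with u. lra. unfold phi; destruct Rle_dec; lra.
Qed.

Lemma tak_half : takagi (1/2) = 1/2.
Proof. replace (1/2) with (1/2)%R by ring. rewrite tak_rec by lra.
  replace (phi (1/2)) with 1 by (unfold phi; destruct Rle_dec; lra). rewrite tak1. lra. Qed.

Lemma tak_pow_eq j u : 0 <= u <= 1 -> takagi (u / 2^j) = INR j * u / 2^j + takagi u / 2^j.
Proof.
  intros H. induction j.
  - simpl. rewrite !Rdiv_1_r. ring.
  - assert (0 < 2^j) by (apply pow_lt; lra).
    assert (0 <= u/2^j <= 1).
    { split. apply Rdiv_le_0_compat; lra. apply Rmult_le_reg_r with (2^j); auto.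
      field_simplify; try lra. assert (1 <= 2^j) by (apply pow_R1_Rle; lra). lra. }
    replace (u / 2^(S j)) with ((u/2^j)/2) by (simpl; field; lra).
    rewrite tak_half_eq by auto. rewrite IHj. rewrite S_INR. simpl. field. lra.
Qed.

Definition KLP m := forall K s, (K+1 <= 2^m)%nat -> 0 <= s <= 1 ->
  takagi ((INR K + s)/2^m) = takagi (INR K/2^m)
     + s * (takagi ((INR K + 1)/2^m) - takagi (INR K/2^m)) + takagi s / 2^m.

Lemma INR_pow2 m : INR (2^m) = 2^m.
Proof. rewrite pow_INR. reflexivity. Qed.

Lemma KL_caseA m : KLP m -> forall K s, (K+1 <= 2^m)%nat -> 0 <= s <= 1 ->
  takagi ((INR K + s)/2^(S m)) = takagi (INR K/2^(S m))
     + s * (takagi ((INR K + 1)/2^(S m)) - takagi (INR K/2^(S m))) + takagi s / 2^(S m).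
Proof.
  intros IH K s HK Hs.
  assert (P: 0 < 2^m) by (apply pow_lt; lra).
  assert (HK': INR K + 1 <= 2^m).
  { rewrite <- INR_pow2. replace 1 with (INR 1) by reflexivity. rewrite <- plus_INR. apply le_INR; lia. }
  assert (K0 : 0 <= INR K) by apply pos_INR.
  assert (U: forall v, 0 <= v <= INR K + 1 -> takagi (v / 2^(S m)) = v/2^(S m) + takagi (v/2^m)/2).
  { intros v Hv. replace (v / 2^(S m)) with ((v/2^m)/2) by (simpl; field; lra).
    rewrite tak_half_eq. simpl; field; lra.
    split. apply Rdiv_le_0_compat; lra. apply Rmult_le_reg_r with (2^m); auto.
    field_simplify; lra. }
  rewrite (U (INR K + s)) by lra. rewrite (U (INR K)) by lra. rewrite (U (INR K + 1)) by lra.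
  rewrite IH by auto. simpl. field. lra.
Qed.

Lemma KL m : KLP m.
Proof.
  induction m.
  - intros K s HK Hs. simpl in HK. assert (K = 0%nat) by lia. subst K. simpl.
    rewrite !Rdiv_1_r, Rplus_0_l. replace (0+1) with 1 by ring. rewrite tak0, tak1. ring.
  - intros K s HK Hs.
    destruct (Compare_dec.le_lt_dec (K+1) (2^m)) as [HA|HB].
    + apply KL_caseA; auto.
    + set (K2 := (2^(S m) - 1 - K)%nat).
      assert (HK2 : (K2 + 1 <= 2^m)%nat) by (unfold K2; simpl in *; lia).
      assert (E : INR K2 = 2^(S m) - 1 - INR K).
      { unfold K2. rewrite !minus_INR. rewrite INR_pow2. simpl. lra. simpl in *; lia. simpl in *; lia. }
      pose proof (KL_caseA m IHm K2 (1 - s) HK2 ltac:(lra)) as H.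
      assert (P: 0 < 2^(S m)) by (apply pow_lt; lra).
      assert (R1: forall v, takagi v = takagi (1 - v)) by (intros; rewrite tak_sym; auto).
      rewrite (R1 ((INR K + s)/2^(S m))), (R1 (INR K/2^(S m))), (R1 ((INR K + 1)/2^(S m))).
      rewrite (R1 s).
      replace (1 - (INR K + s) / 2 ^ S m) with ((INR K2 + (1 - s))/2^(S m)) by (rewrite E; field; lra).
      replace (1 - INR K / 2 ^ S m) with ((INR K2 + 1)/2^(S m)) by (rewrite E; field; lra).
      replace (1 - (INR K + 1) / 2 ^ S m) with (INR K2 /2^(S m)) by (rewrite E; field; lra).
      rewrite H. ring.
Qed.

Definition Dsl m K := 2^m * (takagi ((INR K+1)/2^m) - takagi (INR K/2^m)).

Lemma KL' m K s : (K+1 <= 2^m)%nat -> 0 <= s <= 1 ->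
  takagi ((INR K + s)/2^m) = takagi (INR K/2^m) + s * Dsl m K / 2^m + takagi s / 2^m.
Proof.
  intros. rewrite KL by auto. unfold Dsl. field. apply pow_nonzero; lra.
Qed.

Lemma Dsl_left m K : (K+1 <= 2^m)%nat -> Dsl (S m) (2*K) = Dsl m K + 1.
Proof.
  intros H. unfold Dsl. assert (P: 0 < 2^m) by (apply pow_lt; lra).
  rewrite mult_INR. replace (INR 2) with 2 by reflexivity.
  replace ((2 * INR K + 1) / 2 ^ S m) with ((INR K + /2)/2^m) by (simpl; field; lra).
  replace (2 * INR K / 2 ^ S m) with (INR K/2^m) by (simpl; field; lra).
  rewrite KL by (auto; lra). replace (/2) with (1/2) by field. rewrite tak_half.
  simpl. field. lra.
Qed.

Lemma Dsl_right m K : (K+1 <= 2^m)%nat -> Dsl (S m) (2*K+1) = Dsl m K - 1.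
Proof.
  intros H. unfold Dsl. assert (P: 0 < 2^m) by (apply pow_lt; lra).
  rewrite plus_INR, mult_INR. replace (INR 2) with 2 by reflexivity. replace (INR 1) with 1 by reflexivity.
  replace ((2 * INR K + 1 + 1) / 2 ^ S m) with ((INR K + 1)/2^m) by (simpl; field; lra).
  replace ((2 * INR K + 1) / 2 ^ S m) with ((INR K + /2)/2^m) by (simpl; field; lra).
  rewrite (KL m K (/2)) by (auto; lra). replace (/2) with (1/2) by field. rewrite tak_half.
  simpl. field. lra.
Qed.

Lemma Dsl_iter m K j : (K+1 <= 2^m)%nat -> Dsl (m+j) (K*2^j) = Dsl m K + INR j.
Proof.
  intros H. induction j.
  - rewrite Nat.add_0_r, Nat.mul_1_r. simpl; ring.
  - replace (m + S j)%nat with (S (m+j)) by lia.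
    replace (K * 2^(S j))%nat with (2 * (K * 2^j))%nat by (simpl; lia).
    rewrite Dsl_left. rewrite IHj, S_INR. ring.
    rewrite Nat.pow_add_r. 
    assert (1 <= 2^j)%nat by (apply Nat.neq_0_lt_0, Nat.pow_nonzero; lia).
    nia.
Qed.

Definition ap (a : nat -> nat) n := match n with O => O | S _ => a n end.

Fixpoint NN (a : nat -> nat) n : nat := match n with
  | O => O
  | S k => (NN a k * 2^(ap a (S k) - ap a k) + 1)%nat end.

Definition SS a n := INR (NN a n) / 2^(ap a n).

Definition incr (a : nat -> nat) := (1 <= a 1)%nat /\ forall n, (1 <= n)%nat -> (a n < a (S n))%nat.

Section Seq.
Variable a : nat -> nat.
Hypothesis Ha : incr a.

Lemma ap_inc n : (ap a n < ap a (S n))%nat.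
Proof. destruct Ha as [H1 H2]. destruct n; simpl. lia. apply H2; lia. Qed.

Lemma ap_ge n : (n <= ap a n)%nat.
Proof. induction n. simpl; lia. pose proof (ap_inc n). lia. Qed.

Lemma ap_mono n m : (n <= m)%nat -> (ap a n <= ap a m)%nat.
Proof. induction 1. lia. pose proof (ap_inc m). lia. Qed.

Lemma ap_smono n m : (n < m)%nat -> (ap a n < ap a m)%nat.
Proof. intros H. pose proof (ap_inc n). pose proof (ap_mono (S n) m H). lia. Qed.

Lemma p2pos k : (1 <= 2^k)%nat.
Proof. apply Nat.neq_0_lt_0, Nat.pow_nonzero; lia. Qed.

Lemma NN_bound n : (NN a n + 1 <= 2^(ap a n))%nat.
Proof.
  induction n. simpl; lia.
  simpl NN. pose proof (ap_inc n). set (d := (ap a (S n) - ap a n)%nat).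
  replace (ap a (S n)) with (ap a n + d)%nat by (unfold d; lia).
  rewrite Nat.pow_add_r. assert (2 <= 2^d)%nat.
  { assert (1 <= d)%nat by (unfold d; lia). replace d with (S (d-1)) by lia. simpl. pose proof (p2pos (d-1)). lia. }
  set (X := (2^ap a n)%nat) in *. set (Y := (2^d)%nat) in *. set (M := NN a n) in *.
  assert ((M+1)*Y <= X*Y)%nat by (apply Nat.mul_le_mono_r; lia).
  change (2 ^ (a (S n) - ap a n))%nat with Y. nia.
Qed.

Lemma SS_succ n : SS a (S n) = SS a n + / 2^(ap a (S n)).
Proof.
  unfold SS. simpl NN. pose proof (ap_inc n). set (d := (ap a (S n) - ap a n)%nat).
  replace (ap a (S n)) with (ap a n + d)%nat by (unfold d; lia).
  rewrite plus_INR, mult_INR, INR_pow2, pow_add. replace (INR 1) with 1 by reflexivity.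
  change (a (S n) - ap a n)%nat with d. field. split; apply pow_nonzero; lra.
Qed.

Lemma SS_0 : SS a 0 = 0.
Proof. unfold SS; simpl; field. Qed.

Lemma SS_diff n m : (n <= m)%nat -> SS a m - SS a n <= / 2^(ap a n) - / 2^(ap a m).
Proof.
  induction 1. lra. rewrite SS_succ.
  pose proof (ap_inc m). 
  assert (/ 2 ^ ap a (S m) <= / 2 ^ ap a m / 2).
  { assert (0 < 2^ap a m) by (apply pow_lt; lra).
    assert (2^(S (ap a m)) <= 2^(ap a (S m))) by (apply Rle_pow; lra || lia).
    assert (/2^(ap a (S m)) <= /2^(S (ap a m))) by (apply Rinv_le_contravar; simpl in *; nra).
    change (2^(S (ap a m))) with (2 * 2^(ap a m)) in H3. rewrite Rinv_mult in H3. lra. }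
  lra.
Qed.

Lemma SS_diff2 n m : (n < m)%nat -> SS a m - SS a n >= / 2^(ap a (S n)).
Proof.
  induction 1. rewrite SS_succ; lra. rewrite SS_succ.
  assert (0 < / 2^(ap a (S m))) by (apply Rinv_0_lt_compat, pow_lt; lra). lra.
Qed.

Lemma SS_mono n m : (n <= m)%nat -> SS a n <= SS a m.
Proof.
  induction 1. lra. rewrite SS_succ.
  assert (0 < / 2^(ap a (S m))) by (apply Rinv_0_lt_compat, pow_lt; lra). lra.
Qed.

Lemma sum_SS N : sum_n (fun k => (/2)^(a (S k))) N = SS a (S N).
Proof.
  induction N.
  - rewrite sum_O, SS_succ, SS_0. simpl ap. rewrite pow_inv. rewrite Rplus_0_l; reflexivity.
  - rewrite sum_Sn, IHN. rewrite (SS_succ (S N)). simpl ap. rewrite pow_inv. reflexivity.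
Qed.

End Seq.

Definition tt a z n := 2^(ap a n) * z - INR (NN a n).

Section Pt.
Variable a : nat -> nat.
Variable z : R.
Hypothesis Ha : incr a.
Hypothesis Hnd : ~ dyadic z.
Hypothesis Hser : is_series (fun k => (/2)^(a (S k))) z.

Lemma lim_SS : is_lim_seq (fun N => SS a (S N)) z.
Proof.
  apply is_lim_seq_ext with (u := sum_n (fun k => (/2)^(a (S k)))).
  intros; apply sum_SS; auto. exact Hser.
Qed.

Lemma z_ge_SS m : SS a m <= z.
Proof.
  pose proof (proj1 (is_lim_seq_incr_n _ m _) lim_SS) as H.
  assert (Rbar_le (SS a m) z).
  { apply (is_lim_seq_le (fun _ => SS a m) _ _ _ ) with (2 := is_lim_seq_const _) (3 := H).
    intros N. apply SS_mono; auto; lia. }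
  exact H0.
Qed.

Lemma z_le_SS n : z <= SS a n + / 2^(ap a n).
Proof.
  assert (Rbar_le z (SS a n + / 2^(ap a n))).
  { apply (is_lim_seq_le _ (fun _ => SS a n + / 2^(ap a n)) _ _ ) with (2 := lim_SS) (3 := is_lim_seq_const _).
    intros N. destruct (Compare_dec.le_lt_dec (S N) n).
    - pose proof (SS_mono a Ha _ _ l). assert (0 < / 2^(ap a n)) by (apply Rinv_0_lt_compat, pow_lt; lra). lra.
    - pose proof (SS_diff a Ha n (S N) ltac:(lia)). assert (0 < / 2^(ap a (S N))) by (apply Rinv_0_lt_compat, pow_lt; lra). lra. }
  exact H.
Qed.

Lemma tt_eq n : tt a z n = 2^(ap a n) * (z - SS a n).
Proof. unfold tt, SS. field. apply pow_nonzero; lra. Qed.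

Lemma tt_pos n : 0 < tt a z n.
Proof.
  rewrite tt_eq. pose proof (z_ge_SS (S n)). rewrite SS_succ in H by auto.
  assert (0 < / 2^(ap a (S n))) by (apply Rinv_0_lt_compat, pow_lt; lra).
  assert (0 < 2^(ap a n)) by (apply pow_lt; lra). nra.
Qed.

Lemma tt_lt1 n : tt a z n < 1.
Proof.
  rewrite tt_eq. pose proof (z_le_SS n).
  assert (0 < 2^(ap a n)) by (apply pow_lt; lra).
  assert (2^(ap a n) * (z - SS a n) <= 1).
  { replace 1 with (2^(ap a n) * / 2^(ap a n)) by (field; lra). apply Rmult_le_compat_l; lra. }
  destruct H1; auto. exfalso. apply Hnd. exists (Z.of_nat (NN a n + 1)), (ap a n).
  rewrite <- INR_IZR_INZ, plus_INR. unfold SS in H1. simpl. field_simplify in H1; [|lra].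
  apply Rmult_eq_reg_r with (2^(ap a n)); [|lra]. field_simplify; [|lra]. lra.
Qed.

Lemma tt_rec n : tt a z (S n) = 2^(ap a (S n) - ap a n) * tt a z n - 1.
Proof.
  unfold tt. pose proof (ap_inc a Ha n).
  change (NN a (S n)) with (NN a n * 2^(ap a (S n) - ap a n) + 1)%nat.
  rewrite plus_INR, mult_INR, INR_pow2.
  replace (ap a (S n)) with (ap a n + (ap a (S n) - ap a n))%nat at 1 by lia.
  rewrite pow_add. simpl INR. ring.
Qed.

Lemma tt_bounds n : / 2^(ap a (S n) - ap a n) < tt a z n < 2 / 2^(ap a (S n) - ap a n).
Proof.
  pose proof (tt_rec n). pose proof (tt_pos (S n)). pose proof (tt_lt1 (S n)).
  set (P := 2^(ap a (S n) - ap a n)) in *. assert (0 < P) by (apply pow_lt; lra).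
  split.
  - apply Rmult_lt_reg_l with P; auto. field_simplify; lra.
  - apply Rmult_lt_reg_l with P; auto. field_simplify; lra.
Qed.

End Pt.

Section Q.
Variable a : nat -> nat.
Variable z : R.
Hypothesis Ha : incr a.
Hypothesis Hnd : ~ dyadic z.
Hypothesis Hser : is_series (fun k => (/2)^(a (S k))) z.

Lemma NN_S n : NN a (S n) = (NN a n * 2^(ap a (S n) - ap a n) + 1)%nat.
Proof. reflexivity. Qed.

Lemma K0_bound n : (NN a n * 2^(ap a (S n) - ap a n) + 1 <= 2^(ap a (S n)))%nat.
Proof. pose proof (NN_bound a Ha (S n)). rewrite NN_S in H. lia. Qed.

Lemma sig_eq n : Dsl (ap a n) (NN a n) = INR (ap a n) - 2 * INR n.
Proof.
  induction n.
  - simpl. unfold Dsl. simpl. replace ((0+1)/1) with 1 by field. replace (0/1) with 0 by field.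
    rewrite tak0, tak1. ring.
  - pose proof (ap_inc a Ha n). set (d := (ap a (S n) - ap a n)%nat).
    assert (E1 : ap a (S n) = S (ap a n + (d - 1))) by (unfold d; lia).
    assert (E2 : NN a (S n) = (2 * (NN a n * 2^(d-1)) + 1)%nat).
    { rewrite NN_S. fold d. replace d with (S (d-1)) at 1 by (unfold d; lia). simpl. lia. }
    assert (Hd : (1 <= d)%nat) by (unfold d; lia). clearbody d. rewrite E1, E2. rewrite Dsl_right.
    + rewrite Dsl_iter by (apply NN_bound; auto). rewrite IHn.
      rewrite S_INR, S_INR, plus_INR, minus_INR by lia. simpl INR. ring.
    + pose proof (NN_bound a Ha n). rewrite Nat.pow_add_r.
      pose proof (p2pos (d-1)). set (Y := (2^(d-1))%nat) in *. set (X := (2^ap a n)%nat) in *.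
      assert ((NN a n+1)*Y <= X*Y)%nat by (apply Nat.mul_le_mono_r; lia). nia.
Qed.

Lemma rho_eq n : Dsl (ap a (S n)) (NN a n * 2^(ap a (S n) - ap a n))
   = INR (ap a (S n)) - 2 * INR (S n) + 2.
Proof.
  pose proof (ap_inc a Ha n).
  replace (ap a (S n)) with (ap a n + (ap a (S n) - ap a n))%nat at 1 by lia.
  rewrite Dsl_iter by (apply NN_bound; auto). rewrite sig_eq.
  rewrite minus_INR by lia. rewrite S_INR. ring.
Qed.

Lemma Qform n r : 0 < r <= 1 ->
  (takagi z - takagi (z - (r + tt a z (S n))/2^(ap a (S n)))) / ((r + tt a z (S n))/2^(ap a (S n)))
  = INR (ap a (S n)) - 2*INR (S n) + (2*r + takagi (tt a z (S n)) - takagi r)/(r + tt a z (S n)).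
Proof.
  intros Hr. set (m := ap a (S n)). set (t := tt a z (S n)).
  set (K0 := (NN a n * 2^(ap a (S n) - ap a n))%nat).
  pose proof (tt_pos a z Ha Hser (S n)) as tp. pose proof (tt_lt1 a z Ha Hnd Hser (S n)) as tl.
  fold t in tp, tl.
  assert (P : 0 < 2^m) by (apply pow_lt; lra).
  assert (Hz : z = (INR (NN a (S n)) + t)/2^m) by (unfold t, tt; fold m; field; lra).
  assert (HK : INR (NN a (S n)) = INR K0 + 1) by (rewrite NN_S, plus_INR; reflexivity).
  assert (B0 : (K0 + 1 <= 2^m)%nat) by (apply K0_bound).
  assert (B1 : (NN a (S n) + 1 <= 2^m)%nat) by (apply NN_bound; auto).
  assert (Hzh : z - (r + t)/2^m = (INR K0 + (1 - r))/2^m) by (rewrite Hz, HK; field; lra).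
  rewrite Hzh.
  rewrite (KL' m K0 (1 - r)) by (auto; lra).
  rewrite Hz. rewrite (KL' m (NN a (S n)) t) by (auto; lra).
  rewrite HK. rewrite (KL' m K0 1) by (auto; lra). rewrite tak1.
  replace (1 - r) with (1 - r) by ring. rewrite tak_sym.
  unfold K0, m. rewrite rho_eq.
  replace (Dsl (ap a (S n)) (NN a (S n))) with (INR (ap a (S n)) - 2 * INR (S n)) by (rewrite sig_eq; auto).
  fold m. field. split; lra.
Qed.

End Q.

Lemma find_j_aux N r : (/2)^N < r <= 1 -> exists j, / 2^(S j) < r <= / 2^j.
Proof.
  revert r. induction N; intros r Hr.
  - simpl in Hr. lra.
  - destruct (Rlt_le_dec (/2) r).
    + exists 0%nat. simpl. split; lra.
    + destruct (IHN (2*r)) as [j Hj].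
      { simpl in Hr. split; lra. }
      exists (S j). assert (0 < 2^j) by (apply pow_lt; lra).
      simpl in *. rewrite !Rinv_mult in *. split; lra.
Qed.

Lemma find_j r : 0 < r <= 1 -> exists j, / 2^(S j) < r <= / 2^j.
Proof.
  intros Hr. destruct (pow_lt_1_zero (/2) ltac:(rewrite Rabs_pos_eq; lra) r ltac:(lra)) as [N HN].
  specialize (HN N (le_n _)). rewrite Rabs_pos_eq in HN by (apply pow_le; lra).
  apply (find_j_aux N). lra.
Qed.

Lemma TB j r : / 2^(S j) < r <= / 2^j -> INR j * r <= takagi r <= (INR j + 2) * r.
Proof.
  intros [H1 H2]. assert (P : 0 < 2^j) by (apply pow_lt; lra).
  set (u := 2^j * r).
  assert (Hu : r = u / 2^j) by (unfold u; field; lra).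
  assert (U1 : /2 < u <= 1).
  { unfold u. simpl in H1. rewrite Rinv_mult in H1. split.
    - apply Rmult_lt_reg_r with (/2^j). apply Rinv_0_lt_compat; lra.
      replace (2^j * r * / 2^j) with r by (field; lra). lra.
    - replace 1 with (2^j * / 2^j) by (field; lra). apply Rmult_le_compat_l; lra. }
  rewrite Hu. rewrite tak_pow_eq by lra. pose proof (tak_bounds u ltac:(lra)).
  assert (0 <= takagi u / 2^j) by (apply Rdiv_le_0_compat; lra).
  assert (takagi u / 2^j <= 2 * (u / 2^j)).
  { replace (2 * (u/2^j)) with ((2*u)/2^j) by (field; lra). unfold Rdiv. apply Rmult_le_compat_r. left; apply Rinv_0_lt_compat; lra. lra. }
  split; unfold Rdiv in *; nra.
Qed.

Lemma INR_le_pow e : INR e <= 2^e.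
Proof.
  induction e. simpl; lra. rewrite S_INR. simpl. assert (1 <= 2^e) by (apply pow_R1_Rle; lra). lra.
Qed.

Lemma Tt_bounds k t : (1 <= k)%nat -> / 2^k < t < 2 / 2^k ->
  (INR k - 1) * t <= takagi t <= (INR k + 1) * t.
Proof.
  intros Hk Ht. assert (P : 0 < 2^(k-1)) by (apply pow_lt; lra).
  assert (E : 2^k = 2 * 2^(k-1)) by (replace k with (S (k-1)) at 1 by lia; reflexivity).
  assert (INR k = INR (k-1) + 1) by (rewrite minus_INR by lia; simpl; ring).
  destruct (TB (k-1) t) as [A B].
  { replace (S (k-1)) with k by lia. split. lra.
    rewrite E in Ht. unfold Rdiv in Ht. rewrite Rinv_mult in Ht. left. replace (/ 2^(k-1)) with (2 * (/2 * /2^(k-1))) by (field; lra). lra. }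
  split; nra.
Qed.

Definition Phi t r := (2*r + takagi t - takagi r)/(r + t).

Lemma Phi_lower k p t r : (1 <= k)%nat -> (2^p <= k)%nat -> / 2^k < t < 2 / 2^k -> 0 < r <= 1 ->
  INR p - INR k <= Phi t r.
Proof.
  intros Hk Hp Ht Hr. destruct (find_j r Hr) as [j Hj]. destruct (TB j r Hj) as [_ Tr].
  destruct (Tt_bounds k t Hk Ht) as [Tt _].
  assert (Pk : 0 < 2^k) by (apply pow_lt; lra).
  assert (0 < t) by (assert (0 < /2^k) by (apply Rinv_0_lt_compat; lra); lra).
  unfold Phi. apply Rmult_le_reg_r with (r + t). lra. field_simplify; [|lra].
  assert (Hpk : (p < k)%nat).
  { assert (p < 2^p)%nat by (apply Nat.pow_gt_lin_r; lia). lia. }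
  assert (INR p + 1 <= INR k) by (rewrite <- S_INR; apply le_INR; lia).
  assert (0 <= INR p) by apply pos_INR.
  assert (KEY : (INR j + INR p - INR k) * r <= (2 * INR k - 1 - INR p) * t).
  { destruct (Compare_dec.le_lt_dec (j + p) k) as [L|L].
    - assert (INR j + INR p <= INR k) by (rewrite <- plus_INR; apply le_INR; auto).
      assert (0 <= (2 * INR k - 1 - INR p) * t) by (apply Rmult_le_pos; lra). nra.
    - set (e := (j + p - k)%nat).
      assert (Ee : INR e = INR j + INR p - INR k) by (unfold e; rewrite minus_INR, plus_INR by lia; ring).
      rewrite <- Ee.
      assert (Pj : 0 < 2^j) by (apply pow_lt; lra). assert (Pe : 0 < 2^e) by (apply pow_lt; lra).
      assert (Pp : 0 < 2^p) by (apply pow_lt; lra).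
      assert (Epow : 2^j * 2^p = 2^k * 2^e) by (rewrite <- !pow_add; f_equal; unfold e; lia).
      assert (Hkp : 2^p <= INR k) by (rewrite <- INR_pow2; apply le_INR; auto).
      assert (He : INR e <= 2^e) by apply INR_le_pow.
      assert (A1 : INR e * r <= INR e / 2^j).
      { unfold Rdiv. apply Rmult_le_compat_l. apply pos_INR. lra. }
      assert (A2 : INR e / 2^j <= INR k / 2^k).
      { apply Rmult_le_reg_r with (2^j * 2^k); [nra|]. field_simplify; try lra.
        apply Rmult_le_reg_r with (2^p); auto.
        replace (2^j * INR k * 2^p) with (INR k * (2^j * 2^p)) by ring. rewrite Epow.
        replace (INR k * (2^k * 2^e)) with (INR k * 2^e * 2^k) by ring.
        assert (0 <= INR e) by apply pos_INR.
        assert (INR e * 2^p <= INR k * 2^e) by (rewrite (Rmult_comm (INR k)); apply Rmult_le_compat; lra).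
        replace (INR e * 2 ^ k * 2 ^ p) with (INR e * 2^p * 2^k) by ring.
        apply Rmult_le_compat_r; lra. }
      assert (A3 : INR k / 2^k <= INR k * t).
      { unfold Rdiv. apply Rmult_le_compat_l. apply pos_INR. lra. }
      assert (INR k * t <= (2 * INR k - 1 - INR p) * t) by (apply Rmult_le_compat_r; lra).
      lra. }
  nra.
Qed.

Lemma Phi_upper k p t : (1 <= k)%nat -> (k < 2^(S p))%nat -> (p <= k)%nat -> / 2^k < t < 2 / 2^k ->
  0 < / 2^(k-p) <= 1 /\ Phi t (/ 2^(k-p)) <= INR p - INR k + 10.
Proof.
  intros Hk Hp Hpk Ht.
  assert (Pk : 0 < 2^k) by (apply pow_lt; lra).
  assert (Pkp : 0 < 2^(k-p)) by (apply pow_lt; lra).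
  assert (Pp : 0 < 2^p) by (apply pow_lt; lra).
  assert (Ep : 2^(k-p) * 2^p = 2^k) by (rewrite <- pow_add; f_equal; lia).
  set (r := / 2^(k-p)).
  assert (Hr : 0 < r <= 1).
  { split. apply Rinv_0_lt_compat; lra. unfold r. rewrite <- Rinv_1. apply Rinv_le_contravar. lra.
    apply pow_R1_Rle; lra. }
  split; auto.
  destruct (Tt_bounds k t Hk Ht) as [_ Tt].
  assert (Tr : takagi r = INR (k-p) * r).
  { unfold r. replace (/ 2^(k-p)) with (1/2^(k-p)) by (field; lra).
    rewrite tak_pow_eq by lra. rewrite tak1. field. lra. }
  assert (0 < t) by (assert (0 < /2^k) by (apply Rinv_0_lt_compat; lra); lra).
  assert (Ek : INR (k-p) = INR k - INR p) by (rewrite minus_INR; auto).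
  assert (Hkk : INR k < 2 * 2^p) by (change (2 * 2^p) with (2^(S p)); rewrite <- INR_pow2; apply lt_INR; auto).
  assert (Hr2 : r = 2^p / 2^k) by (unfold r; rewrite <- Ep; field; lra).
  unfold Phi. apply Rmult_le_reg_r with (r + t). lra. field_simplify; [|lra].
  rewrite Tr, Ek.
  assert (T2 : 2 * INR k * t <= 4 * INR k / 2^k).
  { assert (0 <= INR k) by apply pos_INR. unfold Rdiv in *. nra. }
  assert (T3 : 4 * INR k / 2^k <= 8 * r).
  { rewrite Hr2. unfold Rdiv. assert (0 < /2^k) by (apply Rinv_0_lt_compat; lra). nra. }
  assert (0 <= INR p) by apply pos_INR.
  nra.
Qed.

Definition LP (f : R -> R) x := forall M, exists d, 0 < d /\ forall h, 0 < h < d -> M < (f x - f (x - h))/h.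
Definition LM (f : R -> R) x := forall M, exists d, 0 < d /\ forall h, 0 < h < d -> (f x - f (x - h))/h < M.
Definition RP (f : R -> R) x := forall M, exists d, 0 < d /\ forall h, 0 < h < d -> M < (f (x + h) - f x)/h.
Definition RM (f : R -> R) x := forall M, exists d, 0 < d /\ forall h, 0 < h < d -> (f (x + h) - f x)/h < M.

Lemma left_p_iff f x : left_deriv_is f x p_infty <-> LP f x.
Proof.
  split.
  - intros H M. specialize (H (fun y => M < y)). destruct H as [eps He].
    { exists M; auto. }
    exists eps. split. apply cond_pos. intros h Hh.
    specialize (He (- h)). simpl in He.
    replace ((f x - f (x - h)) / h) with ((f (x + - h) - f x) / - h) by (unfold Rminus; field; lra).
    apply He. change (Rabs (-h - 0) < eps). rewrite Rabs_left; lra. lra.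
  - intros H P [M HP]. destruct (H M) as [d [Hd Hh]]. exists (mkposreal d Hd).
    intros y Hy Hy0. apply HP. change (Rabs (y - 0) < d) in Hy. rewrite Rabs_left in Hy by lra.
    replace ((f (x + y) - f x) / y) with ((f x - f (x - (-y))) / (-y)) by (unfold Rminus; rewrite Ropp_involutive; field; lra).
    apply Hh. lra.
Qed.

Lemma left_m_iff f x : left_deriv_is f x m_infty <-> LM f x.
Proof.
  split.
  - intros H M. specialize (H (fun y => y < M)). destruct H as [eps He].
    { exists M; auto. }
    exists eps. split. apply cond_pos. intros h Hh.
    specialize (He (- h)). simpl in He.
    replace ((f x - f (x - h)) / h) with ((f (x + - h) - f x) / - h) by (unfold Rminus; field; lra).
    apply He. change (Rabs (-h - 0) < eps). rewrite Rabs_left; lra. lra.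
  - intros H P [M HP]. destruct (H M) as [d [Hd Hh]]. exists (mkposreal d Hd).
    intros y Hy Hy0. apply HP. change (Rabs (y - 0) < d) in Hy. rewrite Rabs_left in Hy by lra.
    replace ((f (x + y) - f x) / y) with ((f x - f (x - (-y))) / (-y)) by (unfold Rminus; rewrite Ropp_involutive; field; lra).
    apply Hh. lra.
Qed.

Lemma right_p_iff f x : right_deriv_is f x p_infty <-> RP f x.
Proof.
  split.
  - intros H M. specialize (H (fun y => M < y)). destruct H as [eps He].
    { exists M; auto. }
    exists eps. split. apply cond_pos. intros h Hh.
    apply He. change (Rabs (h - 0) < eps). rewrite Rabs_right; lra. lra.
  - intros H P [M HP]. destruct (H M) as [d [Hd Hh]]. exists (mkposreal d Hd).
    intros y Hy Hy0. apply HP. change (Rabs (y - 0) < d) in Hy. rewrite Rabs_right in Hy by lra.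
    apply Hh. lra.
Qed.

Lemma right_m_iff f x : right_deriv_is f x m_infty <-> RM f x.
Proof.
  split.
  - intros H M. specialize (H (fun y => y < M)). destruct H as [eps He].
    { exists M; auto. }
    exists eps. split. apply cond_pos. intros h Hh.
    apply He. change (Rabs (h - 0) < eps). rewrite Rabs_right; lra. lra.
  - intros H P [M HP]. destruct (H M) as [d [Hd Hh]]. exists (mkposreal d Hd).
    intros y Hy Hy0. apply HP. change (Rabs (y - 0) < d) in Hy. rewrite Rabs_right in Hy by lra.
    apply Hh. lra.
Qed.

Lemma RP_LM f x : (forall y, f (1 - y) = f y) -> (RP f x <-> LM f (1 - x)).
Proof.
  intros Hs. split.
  - intros H M. destruct (H (-M)) as [d [Hd Hh]]. exists d. split; auto. intros h Hh'.
    specialize (Hh h Hh'). rewrite <- (Hs (1 - x - h)), <- (Hs (1 - x)) in *.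
    replace (1 - (1 - x - h)) with (x + h) by ring. replace (1 - (1 - x)) with x by ring.
    replace ((f x - f (x + h)) / h) with (- ((f (x + h) - f x) / h)) by (field; lra). lra.
  - intros H M. destruct (H (-M)) as [d [Hd Hh]]. exists d. split; auto. intros h Hh'.
    specialize (Hh h Hh'). rewrite <- (Hs (1 - x - h)), <- (Hs (1 - x)) in Hh.
    replace (1 - (1 - x - h)) with (x + h) in Hh by ring. replace (1 - (1 - x)) with x in Hh by ring.
    replace ((f x - f (x + h)) / h) with (- ((f (x + h) - f x) / h)) in Hh by (field; lra). lra.
Qed.

Lemma RM_LP f x : (forall y, f (1 - y) = f y) -> (RM f x <-> LP f (1 - x)).
Proof.
  intros Hs. split.
  - intros H M. destruct (H (-M)) as [d [Hd Hh]]. exists d. split; auto. intros h Hh'.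
    specialize (Hh h Hh'). rewrite <- (Hs (1 - x - h)), <- (Hs (1 - x)) in *.
    replace (1 - (1 - x - h)) with (x + h) by ring. replace (1 - (1 - x)) with x by ring.
    replace ((f x - f (x + h)) / h) with (- ((f (x + h) - f x) / h)) by (field; lra). lra.
  - intros H M. destruct (H (-M)) as [d [Hd Hh]]. exists d. split; auto. intros h Hh'.
    specialize (Hh h Hh'). rewrite <- (Hs (1 - x - h)), <- (Hs (1 - x)) in Hh.
    replace (1 - (1 - x - h)) with (x + h) in Hh by ring. replace (1 - (1 - x)) with x in Hh by ring.
    replace ((f x - f (x + h)) / h) with (- ((f (x + h) - f x) / h)) in Hh by (field; lra). lra.
Qed.

Lemma log2_bounds k : (1 <= k)%nat ->
  INR (Nat.log2 k) <= log2 (INR k) < INR (Nat.log2 k) + 1.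
Proof.
  intros Hk. destruct (Nat.log2_spec k ltac:(lia)) as [A B].
  set (p := Nat.log2 k) in *.
  assert (L2 : 0 < ln 2) by (rewrite <- ln_1; apply ln_increasing; lra).
  assert (A' : 2^p <= INR k) by (rewrite <- INR_pow2; apply le_INR; auto).
  assert (B' : INR k < 2^(S p)) by (rewrite <- INR_pow2; apply lt_INR; auto).
  assert (P : 0 < 2^p) by (apply pow_lt; lra).
  unfold log2. split.
  - apply Rmult_le_reg_r with (ln 2); auto. field_simplify; [|lra].
    rewrite <- ln_pow by lra. destruct A' as [A'|A'].
    + left; apply ln_increasing; lra.
    + rewrite A'; lra.
  - apply Rmult_lt_reg_r with (ln 2); auto. field_simplify; [|lra].
    replace (ln 2 * INR p + ln 2) with (INR (S p) * ln 2) by (rewrite S_INR; ring).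
    rewrite <- ln_pow by lra. apply ln_increasing; lra.
Qed.

Section Main.
Variable a : nat -> nat.
Variable z : R.
Hypothesis Ha : incr a.
Hypothesis Hnd : ~ dyadic z.
Hypothesis Hser : is_series (fun k => (/2)^(a (S k))) z.

Definition Qz h := (takagi z - takagi (z - h))/h.

Lemma small d : 0 < d -> exists N, forall n, (N <= n)%nat -> 2 / 2^(ap a n) < d.
Proof.
  intros Hd. destruct (pow_lt_1_zero (/2) ltac:(rewrite Rabs_pos_eq; lra) (d/2) ltac:(lra)) as [N HN].
  exists N. intros n Hn. specialize (HN n Hn). rewrite Rabs_pos_eq in HN by (apply pow_le; lra).
  rewrite pow_inv in HN. pose proof (ap_ge a Ha n).
  assert (2^n <= 2^(ap a n)) by (apply Rle_pow; lra || lia).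
  assert (0 < 2^n) by (apply pow_lt; lra).
  assert (/2^(ap a n) <= /2^n) by (apply Rinv_le_contravar; lra). unfold Rdiv. lra.
Qed.

Lemma find_n w n0 M : SS a n0 <= w -> w < SS a M -> exists n, (n0 <= n)%nat /\ SS a n <= w < SS a (S n).
Proof.
  induction M; intros H1 H2.
  - rewrite SS_0 in H2. pose proof (SS_mono a Ha 0 n0 ltac:(lia)). rewrite SS_0 in H. lra.
  - destruct (Rlt_le_dec w (SS a M)) as [L|L]. auto.
    exists M. split; [|lra]. destruct (Compare_dec.le_lt_dec n0 M); auto.
    pose proof (SS_mono a Ha (S M) n0 ltac:(lia)). lra.
Qed.

Lemma cover N h : 0 < h < z - SS a N -> exists n r, (N <= n)%nat /\ 0 < r <= 1 /\
   h = (r + tt a z (S n)) / 2^(ap a (S n)).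
Proof.
  intros Hh. destruct (small h ltac:(lra)) as [M HM]. specialize (HM M (le_n _)).
  pose proof (z_le_SS a z Ha Hser M).
  assert (P : 0 < 2^(ap a M)) by (apply pow_lt; lra).
  assert (/2^(ap a M) < 2/2^(ap a M)) by (unfold Rdiv; assert (0 < /2^(ap a M)) by (apply Rinv_0_lt_compat; lra); lra).
  destruct (find_n (z - h) N M) as [n [Hn [H1 H2]]]. lra. lra.
  exists n, (2^(ap a (S n)) * h - tt a z (S n)).
  assert (Pm : 0 < 2^(ap a (S n))) by (apply pow_lt; lra).
  rewrite tt_eq by auto. rewrite SS_succ in * by auto.
  split; auto. split.
  - split.
    + apply Rlt_Rminus. apply Rmult_lt_compat_l; lra.
    + assert (2^(ap a (S n)) * (h - (z - (SS a n + / 2 ^ ap a (S n)))) <= 1).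
      { replace 1 with (2^(ap a (S n)) * / 2 ^ ap a (S n)) by (field; lra).
        apply Rmult_le_compat_l; lra. }
      nra.
  - field. lra.
Qed.

Lemma Qform' n r : 0 < r <= 1 ->
  Qz ((r + tt a z (S n)) / 2^(ap a (S n))) = INR (ap a (S n)) - 2*INR (S n) + Phi (tt a z (S n)) r.
Proof. intros. unfold Qz, Phi. apply Qform; auto. Qed.

Lemma tbounds n : (1 <= ap a (S (S n)) - ap a (S n))%nat /\
   / 2^(ap a (S (S n)) - ap a (S n)) < tt a z (S n) < 2 / 2^(ap a (S (S n)) - ap a (S n)).
Proof.
  split. pose proof (ap_inc a Ha (S n)); lia. apply tt_bounds; auto.
Qed.

Lemma kINR n : INR (ap a (S (S n)) - ap a (S n)) = INR (a (S (S n))) - INR (a (S n)).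
Proof. pose proof (ap_inc a Ha (S n)). rewrite minus_INR by lia. reflexivity. Qed.

Definition Gs n := INR (a (S n)) - 2 * INR (a n) + 2 * INR n - log2 (INR (a (S n)) - INR (a n)).

Lemma Q_lower n r : 0 < r <= 1 ->
  - Gs (S n) - 1 <= Qz ((r + tt a z (S n)) / 2^(ap a (S n))).
Proof.
  intros Hr. rewrite Qform' by auto. destruct (tbounds n) as [Hk Ht].
  set (k := (ap a (S (S n)) - ap a (S n))%nat) in *.
  destruct (Nat.log2_spec k ltac:(lia)) as [A B].
  pose proof (Phi_lower k (Nat.log2 k) _ r Hk A Ht Hr).
  pose proof (log2_bounds k Hk). unfold Gs. rewrite <- (kINR n). fold k.
  change (ap a (S n)) with (a (S n)) in *. rewrite S_INR in *.
  assert (INR k = INR (a (S (S n))) - INR (a (S n))) by (unfold k; rewrite kINR; auto).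
  lra.
Qed.

Lemma Q_upper n : exists r, 0 < r <= 1 /\
  Qz ((r + tt a z (S n)) / 2^(ap a (S n))) <= - Gs (S n) + 10.
Proof.
  destruct (tbounds n) as [Hk Ht].
  set (k := (ap a (S (S n)) - ap a (S n))%nat) in *.
  destruct (Nat.log2_spec k ltac:(lia)) as [A B].
  assert (Nat.log2 k <= k)%nat by (assert (Nat.log2 k < 2^Nat.log2 k)%nat by (apply Nat.pow_gt_lin_r; lia); lia).
  destruct (Phi_upper k (Nat.log2 k) _ Hk B H Ht) as [Hr Hp].
  exists (/ 2^(k - Nat.log2 k)). split. lra.
  rewrite Qform' by lra.
  pose proof (log2_bounds k Hk). unfold Gs. rewrite <- (kINR n). fold k.
  change (ap a (S n)) with (a (S n)) in *. rewrite S_INR in *.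
  assert (INR k = INR (a (S (S n))) - INR (a (S n))) by (unfold k; rewrite kINR; auto).
  lra.
Qed.

Lemma Phi_le k t r : (1 <= k)%nat -> / 2^k < t < 2 / 2^k -> 0 < r <= 1 -> Phi t r <= INR k + 1.
Proof.
  intros Hk Ht Hr. destruct (Tt_bounds k t Hk Ht) as [_ Tt].
  assert (0 < /2^k) by (apply Rinv_0_lt_compat, pow_lt; lra).
  assert (Tr : 0 <= takagi r) by (apply tak_bounds; lra).
  assert (1 <= INR k) by (replace 1 with (INR 1) by reflexivity; apply le_INR; auto).
  unfold Phi. apply Rmult_le_reg_r with (r + t). lra. field_simplify; [|lra]. nra.
Qed.

Lemma Q_le n r : 0 < r <= 1 ->
  Qz ((r + tt a z (S n)) / 2^(ap a (S n))) <= INR (a (S (S n))) - 2 * INR (S n) + 1.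
Proof.
  intros Hr. rewrite Qform' by auto. destruct (tbounds n) as [Hk Ht].
  pose proof (Phi_le _ _ r Hk Ht Hr). rewrite kINR in H.
  change (ap a (S n)) with (a (S n)) in *. lra.
Qed.

Lemma Q_ge1 n : INR (a (S n)) - 2 * INR (S n) + 1 <= Qz (z - SS a n).
Proof.
  assert (E : z - SS a n = (1 + tt a z (S n)) / 2^(ap a (S n))).
  { rewrite tt_eq by auto. rewrite SS_succ by auto. field. apply pow_nonzero; lra. }
  rewrite E, Qform' by lra. unfold Phi. rewrite tak1.
  pose proof (tt_pos a z Ha Hser (S n)). pose proof (tt_lt1 a z Ha Hnd Hser (S n)).
  pose proof (tak_bounds (tt a z (S n)) ltac:(lra)).
  assert (1 <= (2 * 1 + takagi (tt a z (S n)) - 0) / (1 + tt a z (S n))).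
  { apply Rmult_le_reg_r with (1 + tt a z (S n)). lra. field_simplify; lra. }
  change (ap a (S n)) with (a (S n)). lra.
Qed.

Lemma gap_pos N : 0 < z - SS a N.
Proof.
  pose proof (z_ge_SS a z Ha Hser (S N)). rewrite SS_succ in H by auto.
  assert (0 < / 2^(ap a (S N))) by (apply Rinv_0_lt_compat, pow_lt; lra). lra.
Qed.

Theorem left_plus : LP takagi z <-> is_lim_seq Gs m_infty.
Proof.
  rewrite <- is_lim_seq_spec. split.
  - intros H M. destruct (H (- M + 10)) as [d [Hd Hh]].
    destruct (small d Hd) as [N HN]. exists (S N). intros n Hn.
    destruct n as [|n]. lia.
    destruct (Q_upper n) as [r [Hr Hq]].
    assert (0 < tt a z (S n)) by (apply tt_pos; auto). assert (tt a z (S n) < 1) by (apply tt_lt1; auto).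
    assert (P : 0 < 2^(ap a (S n))) by (apply pow_lt; lra).
    specialize (HN (S n) ltac:(lia)).
    assert ((r + tt a z (S n)) / 2^(ap a (S n)) <= 2 / 2^(ap a (S n))).
    { unfold Rdiv. apply Rmult_le_compat_r. left; apply Rinv_0_lt_compat; lra. lra. }
    specialize (Hh ((r + tt a z (S n)) / 2^(ap a (S n)))).
    assert (0 < (r + tt a z (S n)) / 2^(ap a (S n))) by (apply Rdiv_lt_0_compat; lra).
    specialize (Hh ltac:(lra)). fold (Qz ((r + tt a z (S n)) / 2^(ap a (S n)))) in Hh. lra.
  - intros H M. destruct (H (- M - 1)) as [N HN].
    exists (z - SS a N). split. apply gap_pos. intros h Hh.
    destruct (cover N h Hh) as [n [r [Hn [Hr E]]]].
    pose proof (Q_lower n r Hr). rewrite <- E in H0. specialize (HN (S n) ltac:(lia)).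
    fold (Qz h). lra.
Qed.

Theorem left_minus : LM takagi z <-> is_lim_seq (fun n => INR (a (S n)) - 2 * INR n) m_infty.
Proof.
  rewrite <- is_lim_seq_spec. split.
  - intros H M. destruct (H (M - 1)) as [d [Hd Hh]].
    destruct (small d Hd) as [N HN]. exists N. intros n Hn.
    pose proof (Q_ge1 n). specialize (HN n Hn).
    pose proof (z_le_SS a z Ha Hser n). pose proof (gap_pos n).
    assert (/2^(ap a n) < 2/2^(ap a n)) by (unfold Rdiv; assert (0 < /2^(ap a n)) by (apply Rinv_0_lt_compat, pow_lt; lra); lra).
    specialize (Hh (z - SS a n) ltac:(lra)). fold (Qz (z - SS a n)) in Hh. rewrite S_INR in H0. lra.
  - intros H M. destruct (H (M - 1)) as [N HN].
    exists (z - SS a N). split. apply gap_pos. intros h Hh.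
    destruct (cover N h Hh) as [n [r [Hn [Hr E]]]].
    pose proof (Q_le n r Hr). rewrite <- E in H0. specialize (HN (S n) ltac:(lia)).
    fold (Qz h). lra.
Qed.

End Main.

Fixpoint cnt (a : nat -> nat) m : nat := match m with
  | O => O
  | S m' => if Nat.ltb (S m') (ap a (S (cnt a m'))) then cnt a m' else S (cnt a m') end.

Definition mem (a : nat -> nat) m := m = ap a (cnt a m) /\ (1 <= cnt a m)%nat.

Definition KK a m := (NN a (cnt a m) * 2^(m - ap a (cnt a m)))%nat.

Section Cnt.
Variable a : nat -> nat.
Hypothesis Ha : incr a.

Lemma cnt_inv m : (ap a (cnt a m) <= m < ap a (S (cnt a m)))%nat.
Proof.
  induction m.
  - simpl. destruct Ha. lia.
  - simpl cnt. change (ap a (S (cnt a m))) with (a (S (cnt a m))) in *. destruct (Nat.ltb_spec (S m) (a (S (cnt a m)))).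
    + simpl ap in *; lia.
    + pose proof (ap_inc a Ha (S (cnt a m))). simpl ap in *; lia.
Qed.

Lemma cnt_S m : cnt a (S m) = cnt a m /\ ~ mem a (S m) \/ cnt a (S m) = S (cnt a m) /\ mem a (S m).
Proof.
  pose proof (cnt_inv m). unfold mem. simpl cnt. change (ap a (S (cnt a m))) with (a (S (cnt a m))) in *. destruct (Nat.ltb_spec (S m) (a (S (cnt a m)))).
  - left. split; auto. intros [E _]. lia.
  - right. split; auto. simpl ap in *. split; lia.
Qed.

Lemma cnt_ap n : cnt a (ap a n) = n.
Proof.
  pose proof (cnt_inv (ap a n)). destruct (Compare_dec.lt_eq_lt_dec (cnt a (ap a n)) n) as [[L|L]|L]; auto.
  - pose proof (ap_mono a Ha (S (cnt a (ap a n))) n L). lia.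
  - pose proof (ap_smono a Ha n _ L). lia.
Qed.

Lemma cnt_large N m : (ap a N <= m)%nat -> (N <= cnt a m)%nat.
Proof.
  intros H. pose proof (cnt_inv m). destruct (Compare_dec.le_lt_dec N (cnt a m)); auto.
  pose proof (ap_mono a Ha (S (cnt a m)) N l). lia.
Qed.

Lemma KK_parity m : (1 <= m)%nat -> (mem a m -> Nat.Odd (KK a m)) /\ (~ mem a m -> Nat.Even (KK a m)).
Proof.
  intros Hm. unfold mem, KK. pose proof (cnt_inv m). set (n := cnt a m) in *.
  split.
  - intros [E Hn]. rewrite <- E, Nat.sub_diag, Nat.pow_0_r, Nat.mul_1_r.
    destruct n as [|n]. lia. simpl NN. pose proof (ap_inc a Ha n). simpl ap in *.
    exists (NN a n * 2^(a (S n) - ap a n - 1))%nat.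
    set (e := (a (S n) - ap a n - 1)%nat). assert (Ee : (a (S n) - ap a n = S e)%nat) by (unfold e; lia).
    rewrite Ee. simpl. lia.
  - intros Hn. destruct (Nat.eq_dec m (ap a n)) as [E|E].
    + assert (n = 0%nat) by (destruct n; auto; exfalso; apply Hn; split; auto; lia).
      rewrite H0. simpl. exists 0%nat. lia.
    + exists (NN a n * 2^(m - ap a n - 1))%nat.
      set (e := (m - ap a n - 1)%nat). assert (Ee : (m - ap a n = S e)%nat) by (unfold e; lia).
      rewrite Ee. simpl. lia.
Qed.

Variable z : R.
Hypothesis Hnd : ~ dyadic z.
Hypothesis Hser : is_series (fun k => (/2)^(a (S k))) z.

Lemma KK_bounds m : INR (KK a m) < 2^m * z < INR (KK a m) + 1.
Proof.
  pose proof (cnt_inv m). unfold KK. set (n := cnt a m) in *.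
  assert (E : 2^m * z - INR (NN a n * 2^(m - ap a n)) = 2^(m - ap a n) * tt a z n).
  { unfold tt. rewrite mult_INR, INR_pow2.
    replace m with (ap a n + (m - ap a n))%nat at 1 by lia. rewrite pow_add. ring. }
  pose proof (tt_pos a z Ha Hser n). pose proof (tt_bounds a z Ha Hnd Hser n).
  assert (P : 0 < 2^(m - ap a n)) by (apply pow_lt; lra).
  assert (Pd : 0 < 2^(ap a (S n) - ap a n)) by (apply pow_lt; lra).
  assert (Hle : 2^(m - ap a n) * 2 <= 2^(ap a (S n) - ap a n)).
  { replace (2^(m - ap a n) * 2) with (2^(S (m - ap a n))) by (simpl; ring).
    apply Rle_pow; lra || lia. }
  assert (2^(m - ap a n) * tt a z n < 1).
  { destruct H1 as [_ H1]. apply Rlt_le_trans with (2^(m - ap a n) * (2 / 2^(ap a (S n) - ap a n))).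
    apply Rmult_lt_compat_l; lra.
    apply Rmult_le_reg_r with (2^(ap a (S n) - ap a n)); auto. field_simplify; lra. }
  assert (0 < 2^(m - ap a n) * tt a z n) by (apply Rmult_lt_0_compat; lra).
  lra.
Qed.

End Cnt.

Lemma KK_sum a b z m : incr a -> incr b -> ~ dyadic z -> ~ dyadic (1 - z) ->
  is_series (fun k => (/2)^(a (S k))) z -> is_series (fun k => (/2)^(b (S k))) (1 - z) ->
  (KK a m + KK b m + 1 = 2^m)%nat.
Proof.
  intros Ha Hb Hz Hz' Sa Sb.
  pose proof (KK_bounds a Ha z Hz Sa m). pose proof (KK_bounds b Hb (1 - z) Hz' Sb m).
  assert (INR (KK a m + KK b m) < INR (2^m)) by (rewrite plus_INR, INR_pow2; lra).
  assert (INR (2^m) < INR (KK a m + KK b m + 2)) by (rewrite !plus_INR, INR_pow2; simpl; lra).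
  apply INR_lt in H1. apply INR_lt in H2. lia.
Qed.

Lemma xor_mem a b z m : incr a -> incr b -> ~ dyadic z -> ~ dyadic (1 - z) ->
  is_series (fun k => (/2)^(a (S k))) z -> is_series (fun k => (/2)^(b (S k))) (1 - z) ->
  (1 <= m)%nat -> (mem a m /\ ~ mem b m) \/ (~ mem a m /\ mem b m).
Proof.
  intros Ha Hb Hz Hz' Sa Sb Hm.
  pose proof (KK_sum a b z m Ha Hb Hz Hz' Sa Sb).
  destruct (KK_parity a Ha m Hm) as [A1 A2]. destruct (KK_parity b Hb m Hm) as [B1 B2].
  assert (Ev : Nat.Even (2^m)) by (exists (2^(m-1))%nat; replace m with (S (m-1)) at 1 by lia; simpl; lia).
  destruct (Classical_Prop.classic (mem a m)) as [Ma|Ma]; destruct (Classical_Prop.classic (mem b m)) as [Mb|Mb].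
  - exfalso. destruct (A1 Ma) as [p Hp]. destruct (B1 Mb) as [q Hq]. destruct Ev as [e He]. lia.
  - left; auto.
  - right; auto.
  - exfalso. destruct (A2 Ma) as [p Hp]. destruct (B2 Mb) as [q Hq]. destruct Ev as [e He]. lia.
Qed.

Lemma cnt_sum a b z m : incr a -> incr b -> ~ dyadic z -> ~ dyadic (1 - z) ->
  is_series (fun k => (/2)^(a (S k))) z -> is_series (fun k => (/2)^(b (S k))) (1 - z) ->
  (cnt a m + cnt b m = m)%nat.
Proof.
  intros Ha Hb Hz Hz' Sa Sb. induction m. reflexivity.
  destruct (xor_mem a b z (S m) Ha Hb Hz Hz' Sa Sb ltac:(lia)) as [[M1 M2]|[M1 M2]];
  destruct (cnt_S a Ha m) as [[E1 F1]|[E1 F1]]; destruct (cnt_S b Hb m) as [[E2 F2]|[E2 F2]];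
  try contradiction; lia.
Qed.

Section Link.
Variables (a b : nat -> nat) (z : R).
Hypotheses (Ha : incr a) (Hb : incr b) (Hz : ~ dyadic z) (Hz' : ~ dyadic (1 - z))
  (Sa : is_series (fun k => (/2)^(a (S k))) z) (Sb : is_series (fun k => (/2)^(b (S k))) (1 - z)).

Definition F m := INR m - 2 * INR (cnt a m).

Lemma F_b m : F m = 2 * INR (cnt b m) - INR m.
Proof.
  pose proof (cnt_sum a b z m Ha Hb Hz Hz' Sa Sb). unfold F.
  assert (INR (cnt a m) + INR (cnt b m) = INR m) by (rewrite <- plus_INR; f_equal; auto). lra.
Qed.

Lemma Fmi_iff_a : is_lim_seq (fun n => INR (a (S n)) - 2 * INR n) m_infty <-> (forall M, exists N, forall m, (N <= m)%nat -> F m < M).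
Proof.
  rewrite <- is_lim_seq_spec. split.
  - intros H M. destruct (H M) as [N HN]. exists (ap a N). intros m Hm.
    pose proof (cnt_large a Ha N m Hm). specialize (HN _ H0).
    pose proof (cnt_inv a Ha m). unfold F.
    assert (INR m < INR (a (S (cnt a m)))) by (apply lt_INR; simpl ap in H1; lia). lra.
  - intros H M. destruct (H (M - 2)) as [N HN]. exists N. intros n Hn.
    pose proof (ap_ge a Ha (S n)). specialize (HN (ap a (S n)) ltac:(lia)).
    unfold F in HN. rewrite cnt_ap in HN by auto. simpl ap in HN. rewrite S_INR in HN. lra.
Qed.

Lemma Fmi_iff_b : is_lim_seq (fun n => INR (b n) - 2 * INR n) p_infty <-> (forall M, exists N, forall m, (N <= m)%nat -> F m < M).
Proof.
  rewrite <- is_lim_seq_spec. split.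
  - intros H M. destruct (H (- M)) as [N HN]. exists (ap b (S N)). intros m Hm.
    pose proof (cnt_large b Hb (S N) m Hm). specialize (HN _ (le_S_n _ _ (le_S _ _ H0))).
    pose proof (cnt_inv b Hb m). rewrite F_b.
    destruct (cnt b m) as [|c] eqn:Ec. lia.
    assert (INR (b (S c)) <= INR m) by (apply le_INR; simpl ap in H1; lia). lra.
  - intros H M. destruct (H (- M)) as [N HN]. exists (S N). intros n Hn.
    destruct n as [|n]. lia.
    pose proof (ap_ge b Hb (S n)). specialize (HN (ap b (S n)) ltac:(lia)).
    rewrite F_b in HN. rewrite cnt_ap in HN by auto. simpl ap in HN. lra.
Qed.

Theorem link : is_lim_seq (fun n => INR (a (S n)) - 2 * INR n) m_infty <->
               is_lim_seq (fun n => INR (b n) - 2 * INR n) p_infty.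
Proof. rewrite Fmi_iff_a, Fmi_iff_b. tauto. Qed.

End Link.

Lemma nd_sym x : ~ dyadic x -> ~ dyadic (1 - x).
Proof.
  intros H [k [m E]]. apply H. exists (Z.of_nat (2^m) - k)%Z, m.
  rewrite minus_IZR, <- INR_IZR_INZ, INR_pow2.
  assert (0 < 2^m) by (apply pow_lt; lra).
  apply Rmult_eq_reg_r with (2^m); [|lra]. field_simplify; [|lra].
  assert (x = 1 - IZR k / 2^m) by lra. rewrite H1. field. lra.
Qed.

Theorem theorem1 (x : R) (a b : nat -> nat) :
  0 < x < 1 -> ~ dyadic x ->
  binary_positions a x -> binary_positions b (1 - x) ->
  (right_deriv_is takagi x p_infty <->
     is_lim_seq (fun n => INR (a n) - 2 * INR n) p_infty) /\
  (left_deriv_is takagi x p_infty <->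
     is_lim_seq (fun n => INR (a (S n)) - 2 * INR (a n) + 2 * INR n
                          - log2 (INR (a (S n)) - INR (a n))) m_infty) /\
  (right_deriv_is takagi x m_infty <->
     is_lim_seq (fun n => INR (b (S n)) - 2 * INR (b n) + 2 * INR n
                          - log2 (INR (b (S n)) - INR (b n))) m_infty) /\
  (left_deriv_is takagi x m_infty <->
     is_lim_seq (fun n => INR (b n) - 2 * INR n) p_infty).
Proof.
  intros Hx Hnd [A1 [A2 Sa]] [B1 [B2 Sb]].
  assert (Ha : incr a) by (split; auto). assert (Hb : incr b) by (split; auto).
  assert (Hnd' : ~ dyadic (1 - x)) by (apply nd_sym; auto).
  assert (Hnd'' : ~ dyadic (1 - (1 - x))) by (replace (1 - (1 - x)) with x by ring; auto).
  assert (Sa' : is_series (fun k => (/2)^(a (S k))) (1 - (1 - x))) by (replace (1 - (1 - x)) with x by ring; auto).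
  assert (Sym : forall y, takagi (1 - y) = takagi y) by apply tak_sym.
  split; [|split; [|split]].
  - rewrite right_p_iff, (RP_LM _ _ Sym), (left_minus b (1 - x) Hb Hnd' Sb).
    apply (link b a (1 - x) Hb Ha Hnd' Hnd'' Sb Sa').
  - rewrite left_p_iff. apply (left_plus a x Ha Hnd Sa).
  - rewrite right_m_iff, (RM_LP _ _ Sym). apply (left_plus b (1 - x) Hb Hnd' Sb).
  - rewrite left_m_iff, (left_minus a x Ha Hnd Sa).
    apply (link a b x Ha Hb Hnd Hnd' Sa Sb).
Qed.
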